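(* Let $\rho_n$ be the number of distinct Manacher arrays of strings of length $n$ and $\sigma_n$ the number of counter arrays of length $n$. Then $\rho_n\le\sigma_n$; more precisely, $\rho_n$ is at most the number of distinct sequences $(c_1,\dots,c_n)$ arising from strings of length $n$, where $c_i$ is the center of the longest palindromic suffix of $S[1..i]$.
   Context: The center of $S[a..b]$ is $(a+b)/2$. The Manacher array of a string $S$ of length $n$ is the array $\mathsf A[1..2n-1]$ where, for $i=2k-1$, $\mathsf A[i]$ is the largest $r\ge 0$ with $1\le k-r$, $k+r\le n$ and $S[k-r..k+r]$ a palindrome, and for $i=2k$, $\mathsf A[i]$ is the largest $r\ge0$ with $1\le k-r+1$, $k+r\le n$ and $S[k-r+1..k+r]$ a palindrome. A counter array of length $n$ is an integer array $(a_1,\dots,a_n)$ with $1\le a_i\le i$ and $a_{i+1}\ge a_i-1$ for $1\le i<n$. *)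

(* Defs.v *)
From mathcomp Require Import all_boot.
Set Implicit Arguments. Unset Strict Implicit. Unset Printing Implicit Defensive.

(* Strings are sequences over a finite alphabet Sigma; positions are 1-indexed:
   S[j] := nth None (map Some s) (j-1)  (None outside the string). *)
Definition chr (Sigma : eqType) (s : seq Sigma) (j : nat) : option Sigma :=
  nth None (map Some s) j.-1.

(* S[a..b] is a palindrome (1-indexed, inclusive; empty if b < a). *)
Definition pal (Sigma : eqType) (s : seq Sigma) (a b : nat) : bool :=
  all (fun j => chr s j == chr s (a + b - j)) (iota a (b.+1 - a)).

Definition man_ok (Sigma : eqType) (s : seq Sigma) (i r : nat) : bool :=
  let n := size s in
  if odd i then
    let k := i.+1./2 in (* i = 2k-1 *)
    [&& 1 <= k - r, r < k, k + r <= n & pal s (k - r) (k + r)]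
  else
    let k := i./2 in (* i = 2k *)
    [&& r <= k, k + r <= n & pal s (k - r + 1) (k + r)].

(* Manacher array A[1..2n-1], as a sequence of length 2n-1.  Every admissible
   r satisfies r < n, so the max over r < n is the largest admissible r. *)
Definition manacher (Sigma : eqType) (s : seq Sigma) : seq nat :=
  [seq \max_(r < size s | man_ok s i r) r | i <- iota 1 (size s).*2.-1].

Definition lps_len (Sigma : eqType) (s : seq Sigma) (i : nat) : nat :=
  \max_(l < i.+1 | pal s (i.+1 - l) i) l.

(* Twice the center of the longest palindromic suffix of S[1..i]:
   the suffix is S[i-L+1..i], its center is (i-L+1+i)/2. *)
Definition lps_center2 (Sigma : eqType) (s : seq Sigma) (i : nat) : nat :=
  (i.+1 - lps_len s i) + i.

Definition centers2 (Sigma : eqType) (s : seq Sigma) : seq nat :=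
  [seq lps_center2 s i | i <- iota 1 (size s)].

Definition rho (Sigma : finType) (n : nat) : nat :=
  size (undup [seq manacher (tval t) | t <- enum {: n.-tuple Sigma}]).

Definition ncenters (Sigma : finType) (n : nat) : nat :=
  size (undup [seq centers2 (tval t) | t <- enum {: n.-tuple Sigma}]).

(* counter array (a_1..a_n) given as a seq, a_i = nth 0 a (i-1). *)
Definition is_counter (a : seq nat) : bool :=
  all (fun i => (1 <= nth 0 a i.-1 <= i)) (iota 1 (size a)) &&
  all (fun i => nth 0 a i.-1 - 1 <= nth 0 a i) (iota 1 (size a).-1).

(* sigma_n: number of counter arrays of length n (entries are <= n, so
   they are faithfully enumerated by n-tuples over 'I_(n+1)). *)
Definition sigma (n : nat) : nat :=
  #|[set t : n.-tuple 'I_n.+1 | is_counter [seq val x | x <- t]]|.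

(* Main.v *)
Require Import Defs.
From mathcomp Require Import all_boot.
From mathcomp Require Import zify.
Set Implicit Arguments. Unset Strict Implicit.
Section P.
Variable Sigma : eqType.
Implicit Types s t : seq Sigma.

Lemma palP s a b :
  reflect (forall j, a <= j <= b -> chr s j = chr s (a + b - j)) (pal s a b).
Proof.
apply: (iffP allP) => H j.
- move=> Hj; apply/eqP; apply: H; rewrite mem_iota; lia.
- rewrite mem_iota => Hj; apply/eqP; apply: H; lia.
Qed.

Lemma pal_sub s a b a' b' : pal s a b -> a <= a' -> b' <= b -> a' + b' = a + b ->
  pal s a' b'.
Proof.
move=> /palP H h1 h2 h3; apply/palP => j Hj.
rewrite h3; apply: H; lia.
Qed.

Lemma pal_mirror s p b a : pal s p b -> p <= a -> a <= b ->
  pal s a b = pal s p (p + b - a).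
Proof.
move=> /palP P h1 h2; apply/palP/palP => H j Hj.
- have -> : chr s j = chr s (p + b - j) by apply: P; lia.
  rewrite H; last lia.
  rewrite P; last lia.
  congr chr; lia.
- have -> : chr s j = chr s (p + b - j) by apply: P; lia.
  rewrite H; last lia.
  rewrite P; last lia.
  congr chr; lia.
Qed.

Lemma pal_empty s a b : b < a -> pal s a b.
Proof. move=> h; apply/palP => j; lia. Qed.

Lemma lps_spec s i :
  [/\ lps_len s i <= i, pal s (i.+1 - lps_len s i) i &
      forall l, l <= i -> pal s (i.+1 - l) i -> l <= lps_len s i].
Proof.
rewrite /lps_len.
have Hc : 0 < #|(fun l : 'I_i.+1 => pal s (i.+1 - l) i)|.
  apply/card_gt0P; exists ord0; rewrite /in_mem /=; apply: pal_empty; lia.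
case: (eq_bigmax_cond (fun l : 'I_i.+1 => (l : nat)) Hc) => l0 Hl0 E.
rewrite E.
split.
- by rewrite -ltnS.
- exact: Hl0.
- move=> l hl hp.
  have hl' : l < i.+1 by [].
  have := @leq_bigmax_cond _ (fun l : 'I_i.+1 => pal s (i.+1 - l) i)
             (fun l : 'I_i.+1 => (l : nat)) (Ordinal hl') hp.
  by rewrite E.
Qed.


Lemma pal_equiv s t n :
  (forall i, 1 <= i <= n -> lps_len s i = lps_len t i) ->
  forall b a, 1 <= a -> b <= n -> pal s a b = pal t a b.
Proof.
move=> HL; elim/ltn_ind => b IH a ha hb.
case: (ltnP b a) => hab; first by rewrite !pal_empty.
have Hb1 : 1 <= b <= n by lia.
case: (lps_spec s b) => Ls1 Ls2 Ls3.
case: (lps_spec t b) => Lt1 Lt2 Lt3.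
rewrite -(HL _ Hb1) in Lt1 Lt2 Lt3.
set L := lps_len s b in Ls1 Ls2 Ls3 Lt1 Lt2 Lt3.
have ea : b.+1 - (b.+1 - a) = a by lia.
case: (ltngtP L (b.+1 - a)) => hc.
- case hs: (pal s a b); case ht: (pal t a b) => //.
  + have := Ls3 (b.+1 - a); rewrite ea hs; lia.
  + have := Lt3 (b.+1 - a); rewrite ea ht; lia.
- rewrite (pal_mirror Ls2); [|lia|lia].
  rewrite (pal_mirror Lt2); [|lia|lia].
  apply: IH; lia.
- have -> : a = b.+1 - L by lia.
  by rewrite Ls2 Lt2.
Qed.

Lemma manacher_equiv s t :
  size s = size t ->
  (forall i, 1 <= i <= size s -> lps_len s i = lps_len t i) ->
  manacher s = manacher t.
Proof.
move=> Hs HL; rewrite /manacher -Hs; apply: eq_map => i.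
apply: eq_bigl => r; rewrite /man_ok -Hs.
have E := pal_equiv HL.
case: (odd i).
- case h1: (1 <= _ - r) => //=; case h2: (r < _) => //=;
  case h3: (_ + r <= _) => //=; apply: E; lia.
- case h2: (r <= _) => //=; case h3: (_ + r <= _) => //=; apply: E; lia.
Qed.

Lemma centers_lps s t : centers2 s = centers2 t ->
  forall i, 1 <= i <= size s -> lps_len s i = lps_len t i.
Proof.
move=> H i hi.
have Hsz : size s = size t by have := congr1 size H; rewrite !size_map !size_iota.
have := congr1 (fun c => nth 0 c i.-1) H.
rewrite /= /centers2 !(nth_map 0) ?size_iota -?Hsz; try lia.
rewrite !nth_iota; try lia.
rewrite /lps_center2.
have -> : 1 + i.-1 = i by lia.
case: (lps_spec s i) => ? _ _.
case: (lps_spec t i) => ? _ _.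
move=> e; lia.
Qed.
End P.


Lemma undup_le (T1 T2 T3 : eqType) (g : T1 -> T2) (h : T1 -> T3) (T : seq T1) :
  {in T &, forall x y, g x = g y -> h x = h y} ->
  size (undup (map h T)) <= size (undup (map g T)).
Proof.
case: T => [|x0 T'] // H.
set T := x0 :: T' in H *.
pose F y := h (nth x0 T (index y (map g T))).
apply: (@leq_trans (size (map F (undup (map g T))))); last by rewrite size_map.
apply: uniq_leq_size; first exact: undup_uniq.
move=> z; rewrite mem_undup => /mapP [x xT ->].
apply/mapP; exists (g x); first by rewrite mem_undup map_f.
have hi : index (g x) (map g T) < size T.
  by rewrite -(size_map g) index_mem map_f.
rewrite /F; apply: H => //; first exact: mem_nth.
by rewrite -(nth_map x0 (g x0)) // nth_index // map_f.
Qed.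

Lemma lps_bounds (Sigma : eqType) (s : seq Sigma) i :
  1 <= i -> 1 <= i.+1 - lps_len s i <= i.
Proof.
move=> hi; case: (lps_spec s i) => h1 _ h3.
have : 1 <= lps_len s i by apply: h3 => //; apply/palP => j hj; congr chr; lia.
lia.
Qed.

Lemma lps_step (Sigma : eqType) (s : seq Sigma) i :
  lps_len s i.+1 <= lps_len s i + 2.
Proof.
case: (lps_spec s i.+1) => h1 h2 _.
case: (lps_spec s i) => _ _ h3.
case: (leqP (lps_len s i.+1) 2) => hl; first lia.
have : lps_len s i.+1 - 2 <= lps_len s i.
  apply: h3; first lia.
  apply: (pal_sub h2); lia.
lia.
Qed.

Lemma nth_centers (Sigma : eqType) (s : seq Sigma) i : i < size s ->
  nth 0 (centers2 s) i = (i.+2 - lps_len s i.+1) + i.+1.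
Proof.
move=> hi; rewrite /centers2 (nth_map 0) ?size_iota // nth_iota //.
Qed.

Definition Gm (n : nat) (c : seq nat) : n.-tuple 'I_n.+1 :=
  [tuple (inord (nth 0 c i - i.+1) : 'I_n.+1) | i < n].

Lemma nth_Gm n c j : j < n -> nth 0 c j - j.+1 <= n ->
  nth 0 [seq val x | x <- Gm n c] j = nth 0 c j - j.+1.
Proof.
move=> hj hb.
rewrite (nth_map ord0) ?size_tuple // -(tnth_nth ord0 (Gm n c) (Ordinal hj)).
by rewrite tnth_mktuple /= inordK.
Qed.

Lemma cen_fact (Sigma : eqType) (s : seq Sigma) j : j < size s ->
  [/\ nth 0 (centers2 s) j - j.+1 = j.+2 - lps_len s j.+1,
      j.+1 <= nth 0 (centers2 s) j & j.+2 - lps_len s j.+1 <= size s].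
Proof.
move=> hj; rewrite nth_centers //.
have := lps_bounds s (isT : 0 < j.+1). move=> HH. split; lia.
Qed.

Theorem corollary3p6 (Sigma : finType) (n : nat) :
  rho Sigma n <= ncenters Sigma n /\ rho Sigma n <= sigma n.
Proof.
have H1 : rho Sigma n <= ncenters Sigma n.
  rewrite /rho /ncenters; apply: undup_le => x y _ _ e.
  apply: manacher_equiv; first by rewrite !size_tuple.
  exact: centers_lps.
split => //; apply: (leq_trans H1).
rewrite /ncenters /sigma.
set s1 := undup _.
have Hs1 : forall c, c \in s1 -> exists x : n.-tuple Sigma, c = centers2 x.
  by move=> c; rewrite mem_undup => /mapP [x _ ->]; exists x.
have Hsz : forall c, c \in s1 -> size c = n.
  by move=> c /Hs1 [x ->]; rewrite size_map size_iota size_tuple.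
rewrite -(size_map (Gm n)) cardE.
apply: uniq_leq_size.
- rewrite map_inj_in_uniq ?undup_uniq //.
  move=> c1 c2 h1 h2 e.
  apply: (eq_from_nth (x0 := 0)); first by rewrite !Hsz.
  rewrite Hsz // => j hj.
  case: (Hs1 _ h1) => x1 E1; case: (Hs1 _ h2) => x2 E2.
  have hj1 : j < size x1 by rewrite size_tuple.
  have hj2 : j < size x2 by rewrite size_tuple.
  have := congr1 (fun t : n.-tuple 'I_n.+1 => nth 0 [seq val x | x <- t] j) e => /=.
  subst c1 c2.
  case: (cen_fact hj1) => a1 b1 d1; case: (cen_fact hj2) => a2 b2 d2.
  rewrite size_tuple in d1.
  rewrite !nth_Gm ?a1 ?a2 //; last by move: d2; rewrite size_tuple.
  by move=> E; rewrite -(subnK b1) -(subnK b2) a1 a2 E.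
- move=> g /mapP [c hc ->].
  rewrite mem_enum inE.
  case: (Hs1 _ hc) => x E.
  have hx := size_tuple x.
  have hn : forall j, j < n -> nth 0 [seq val y | y <- Gm n c] j = j.+2 - lps_len x j.+1.
    move=> j hj; have hj1 : j < size x by rewrite hx.
    case: (cen_fact hj1) => e1 _ e3.
    by rewrite nth_Gm // E e1 //; move: e3; rewrite hx.
  rewrite /is_counter size_map size_tuple; apply/andP; split; apply/allP => i;
    rewrite mem_iota => hi.
  + rewrite hn; last lia.
    have -> : i.-1.+1 = i by lia.
    have := lps_bounds x (_ : 0 < i); lia.
  + rewrite !hn; try lia.
    have -> : i.-1.+1 = i by lia.
    have := lps_step x i; have := lps_bounds x (_ : 0 < i); lia.
Qed.
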